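(* Let $a,b,c$ be positive numbers with $a<b<c$. Then $\mathcal D_{a,b,c}=\emptyset$ if and only if $Q_{a,b,c}<+\infty$.
   Context: For $a,b,c>0$ and $t\in\mathbb R$, $\mathbf M_{a,b,c}(t)=(\chi_{[0,c)}(t-\mu+\lambda))_{\mu\in a\mathbb Z,\lambda\in b\mathbb Z}$ is the infinite matrix with rows indexed by $a\mathbb Z$ and columns by $b\mathbb Z$, acting by $(\mathbf M_{a,b,c}(t)\mathbf x)(\mu)=\sum_{\lambda\in b\mathbb Z}\chi_{[0,c)}(t-\mu+\lambda)\mathbf x(\lambda)$. $\mathcal B_b$ is the set of vectors $(\mathbf x(\lambda))_{\lambda\in b\mathbb Z}$ with entries in $\{0,1\}$, and $\mathcal B_b^0=\{\mathbf x\in\mathcal B_b:\mathbf x(0)=1\}$. $\mathbf 2$ denotes the vector indexed by $a\mathbb Z$ all of whose entries are $2$. $\mathcal D_{a,b,c}=\{t\in\mathbb R:\mathbf M_{a,b,c}(t)\mathbf x=\mathbf 2\text{ for some }\mathbf x\in\mathcal B_b^0\}$. For $t\in\mathbb R$ and $\mathbf x\in\mathcal B_b$, let $K(t,\mathbf x)=\{\mu\in a\mathbb Z:(\mathbf M_{a,b,c}(t)\mathbf x)(\mu)=2\}$, let $Q_{a,b,c}(t,\mathbf x)=0$ if $K(t,\mathbf x)=\emptyset$ and otherwise $Q_{a,b,c}(t,\mathbf x)=\sup\{n\in\mathbb N:[\mu,\mu+na)\cap a\mathbb Z\subset K(t,\mathbf x)\text{ for some }\mu\in a\mathbb Z\}$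 (the maximal length of a run of consecutive entries equal to $2$), and $Q_{a,b,c}=\sup_{t\in\mathbb R}\sup_{\mathbf x\in\mathcal B_b}Q_{a,b,c}(t,\mathbf x)\in[0,+\infty]$. *)

(* Defs.v *)
From Stdlib Require Import Reals ZArith List.
Open Scope R_scope.

(* Row index mu = a*m (m : Z), column index lambda = b*k (k : Z).
   Binary vectors x in B_b are functions Z -> bool (x k is the entry at b*k). *)

Definition in_Ico (c s : R) : Prop := 0 <= s < c.

(* (M_{a,b,c}(t) x)(a*m) = n : the sum  sum_k chi_[0,c)(t - a m + b k) x(b k)
   has value n.  Since entries are 0/1, this sum is the (finite) number of
   indices k with x k = 1 and t - a m + b k in [0,c). *)
Definition Mx_val (a b c t : R) (x : Z -> bool) (m : Z) (n : nat) : Prop :=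
  exists l : list Z,
    NoDup l /\
    (forall k : Z, In k l <-> (x k = true /\ in_Ico c (t - a * IZR m + b * IZR k))) /\
    length l = n.

Definition D_set (a b c : R) (t : R) : Prop :=
  exists x : Z -> bool, x 0%Z = true /\ forall m : Z, Mx_val a b c t x m 2.

Definition in_K (a b c t : R) (x : Z -> bool) (m : Z) : Prop := Mx_val a b c t x m 2.

Definition has_run (a b c t : R) (x : Z -> bool) (n : nat) : Prop :=
  exists m0 : Z, forall j : nat, (j < n)%nat -> in_K a b c t x (m0 + Z.of_nat j)%Z.

(* Q_{a,b,c} < +infinity : the sup over t, x and run lengths is finite. *)
Definition Q_finite (a b c : R) : Prop :=
  exists N : nat, forall (t : R) (x : Z -> bool) (n : nat), has_run a b c t x n -> (n <= N)%nat.

(* Main.v *)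
Require Import Defs.
From Stdlib Require Import Reals ZArith List Lra Lia Classical ClassicalEpsilon FinFun.
Open Scope R_scope.

Definition cnt (P : Z -> Prop) (n : nat) : Prop :=
  exists l : list Z, NoDup l /\ (forall k, In k l <-> P k) /\ length l = n.

Lemma cnt_ext P Q n : (forall k, P k <-> Q k) -> cnt P n -> cnt Q n.
Proof. intros H [l [H1 [H2 H3]]]. exists l. split; [exact H1|split; [|exact H3]].
 intro k. rewrite H2. apply H. Qed.

Lemma cnt_bij P Q n (f g : Z -> Z) : (forall k, g (f k) = k) -> (forall k, f (g k) = k) ->
  (forall k, Q k <-> P (g k)) -> cnt P n -> cnt Q n.
Proof.
  intros Hgf Hfg HQ [l [H1 [H2 H3]]]. exists (map f l). split; [|split].
  - apply Injective_map_NoDup; [|exact H1]. intros x y E. rewrite <- (Hgf x), <- (Hgf y), E. reflexivity.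
  - intro k. rewrite in_map_iff, HQ, <- H2. split.
    + intros [x [E Hx]]. subst k. rewrite Hgf. exact Hx.
    + intro Hk. exists (g k). split; [apply Hfg | exact Hk].
  - rewrite length_map. exact H3.
Qed.

Lemma normalize a b c N t x n : has_run a b c t x n -> (2*N+1 <= n)%nat ->
  exists t' x', 0 <= t' < c /\ x' 0%Z = true /\
   forall m, (Z.abs m <= Z.of_nat N)%Z -> Mx_val a b c t' x' m 2.
Proof.
  intros [m0 Hr] Hn.
  set (mid := (m0 + Z.of_nat N)%Z).
  assert (Hmid : in_K a b c t x mid).
  { unfold mid. apply Hr. lia. }
  destruct Hmid as [l [Hnd [Hin Hlen]]].
  destruct l as [|k l']; [simpl in Hlen; discriminate|].
  destruct (proj1 (Hin k) (or_introl eq_refl)) as [Hxk Hico].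
  exists (t - a*IZR mid + b*IZR k), (fun j => x (j + k)%Z).
  split; [exact Hico|split; [simpl; exact Hxk|]].
  intros m Hm.
  set (j := Z.to_nat (m + Z.of_nat N)).
  assert (Hj : (j < n)%nat) by (unfold j; lia).
  pose proof (Hr j Hj) as Hrow. unfold in_K in Hrow.
  assert (E : (m0 + Z.of_nat j = m + mid)%Z) by (unfold j, mid; lia).
  rewrite E in Hrow.
  change (cnt (fun i => x (i + k)%Z = true /\ in_Ico c (t - a*IZR mid + b*IZR k - a*IZR m + b*IZR i)) 2).
  apply (cnt_bij (fun i => x i = true /\ in_Ico c (t - a*IZR (m+mid) + b*IZR i)) _ 2
    (fun i => (i - k)%Z) (fun i => (i + k)%Z)); [intro; lia|intro; lia| |exact Hrow].
  intro i. rewrite !plus_IZR.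
  replace (t - a * (IZR m + IZR mid) + b * (IZR i + IZR k)) with
    (t - a * IZR mid + b * IZR k - a * IZR m + b * IZR i) by ring. tauto.
Qed.

Definition io (P : nat -> Prop) := forall N, exists n, (N <= n)%nat /\ P n.
Definition decb (Q : Prop) : bool := if excluded_middle_informative Q then true else false.

Lemma io_mono (P Q : nat -> Prop) : (forall n, P n -> Q n) -> io P -> io Q.
Proof. intros H HP N. destruct (HP N) as [n [h1 h2]]. exists n; auto. Qed.

Lemma io_split (P : nat -> Prop) (Q : nat -> Prop) : io P ->
  io (fun n => P n /\ Q n) \/ io (fun n => P n /\ ~ Q n).
Proof.
  intro HP. apply NNPP. intro H. apply not_or_and in H. destruct H as [H1 H2].
  apply not_all_ex_not in H1. destruct H1 as [N1 H1].
  apply not_all_ex_not in H2. destruct H2 as [N2 H2].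
  destruct (HP (N1 + N2)%nat) as [n [Hn Pn]].
  destruct (classic (Q n)).
  - apply H1. exists n. split; [lia|auto].
  - apply H2. exists n. split; [lia|auto].
Qed.

Lemma dec_io (P : nat -> Prop) (Y : nat -> bool) : io P ->
  io (fun n => P n /\ Y n = decb (io (fun n => P n /\ Y n = true))).
Proof.
  intro HP. unfold decb. destruct (excluded_middle_informative _) as [H|H]; [exact H|].
  destruct (io_split P (fun n => Y n = true) HP) as [H'|H']; [contradiction|].
  revert H'. apply io_mono. intros n [h1 h2]. split; [exact h1|]. destruct (Y n); [contradiction|reflexivity].
Qed.

Record St := mkSt { sP : nat -> Prop; sl : R; sr : R }.

Definition stepS (T : nat -> R) (X : nat -> Z -> bool) (j : nat) (s : St) : St :=
  let P := sP s in
  let b1 := decb (io (fun n => P n /\ X n (Z.of_nat j) = true)) in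
  let P1 := fun n => P n /\ X n (Z.of_nat j) = b1 in
  let b2 := decb (io (fun n => P1 n /\ X n (- Z.of_nat j)%Z = true)) in
  let P2 := fun n => P1 n /\ X n (- Z.of_nat j)%Z = b2 in
  let mid := (sl s + sr s) / 2 in
  if excluded_middle_informative (io (fun n => P2 n /\ T n <= mid))
  then mkSt (fun n => P2 n /\ T n <= mid) (sl s) mid
  else mkSt (fun n => P2 n /\ mid <= T n) mid (sr s).

Fixpoint st (c : R) T X (j : nat) : St :=
  match j with O => mkSt (fun _ => True) 0 c | S j' => stepS T X j' (st c T X j') end.

Lemma step_spec T X j s : io (sP s) -> (forall n, sP s n -> sl s <= T n <= sr s) ->
  let s' := stepS T X j s in
  io (sP s') /\ (forall n, sP s' n -> sl s' <= T n <= sr s') /\ (forall n, sP s' n -> sP s n)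
  /\ sl s <= sl s' /\ sr s' <= sr s /\ sr s' - sl s' = (sr s - sl s)/2
  /\ exists b1 b2, forall n, sP s' n -> X n (Z.of_nat j) = b1 /\ X n (- Z.of_nat j)%Z = b2.
Proof.
  intros Hio Hb s'.
  assert (Hlr : sl s <= sr s).
  { destruct (Hio O) as [n [_ Hn]]. specialize (Hb n Hn). lra. }
  pose proof (dec_io (sP s) (fun n => X n (Z.of_nat j)) Hio) as H1.
  cbv beta in H1.
  set (b1 := decb (io (fun n => sP s n /\ X n (Z.of_nat j) = true))) in *.
  pose proof (dec_io _ (fun n => X n (- Z.of_nat j)%Z) H1) as H2.
  cbv beta in H2.
  set (b2 := decb (io (fun n => (sP s n /\ X n (Z.of_nat j) = b1) /\ X n (- Z.of_nat j)%Z = true))) in *.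
  unfold s', stepS. fold b1. fold b2.
  destruct (excluded_middle_informative _) as [H|H]; simpl.
  - split; [exact H|]. split; [intros n [[[Pn _] _] Hn]; specialize (Hb n Pn); lra|].
    split; [intros n [[[Pn _] _] _]; exact Pn|]. split; [lra|]. split; [lra|]. split; [lra|].
    exists b1, b2. intros n [[[_ e1] e2] _]. auto.
  - destruct (io_split _ (fun n => T n <= (sl s + sr s)/2) H2) as [H'|H']; [contradiction|].
    split. { revert H'. apply io_mono. intros n [h1 h2]. split; [exact h1|lra]. }
    split; [intros n [[[Pn _] _] Hn]; specialize (Hb n Pn); lra|].
    split; [intros n [[[Pn _] _] _]; exact Pn|]. split; [lra|]. split; [lra|]. split; [lra|].
    exists b1, b2. intros n [[[_ e1] e2] _]. auto.
Qed.

Lemma st_spec c T X (hc : 0 < c) (HT : forall n, 0 <= T n <= c) : forall j,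
  io (sP (st c T X j)) /\ (forall n, sP (st c T X j) n -> sl (st c T X j) <= T n <= sr (st c T X j))
  /\ 0 <= sr (st c T X j) - sl (st c T X j) /\ (sr (st c T X j) - sl (st c T X j)) * (INR j + 1) <= c.
Proof.
  induction j as [|j IH].
  - simpl. split; [intro N; exists N; split; auto|]. split; [intros n _; apply HT|]. lra.
  - destruct IH as [I1 [I2 [I3 I4]]].
    destruct (step_spec T X j _ I1 I2) as [J1 [J2 [_ [_ [_ [J6 _]]]]]].
    change (st c T X (S j)) with (stepS T X j (st c T X j)).
    split; [exact J1|]. split; [exact J2|]. rewrite J6, S_INR.
    pose proof (pos_INR j). split; [lra|].
    assert (0 <= (sr (st c T X j) - sl (st c T X j)) * INR j) by (apply Rmult_le_pos; lra).
    nra.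
Qed.

Lemma st_mono c T X (hc : 0 < c) (HT : forall n, 0 <= T n <= c) : forall i d,
  (forall n, sP (st c T X (i + d)) n -> sP (st c T X i) n) /\
  sl (st c T X i) <= sl (st c T X (i + d)) /\ sr (st c T X (i + d)) <= sr (st c T X i).
Proof.
  intros i d. induction d as [|d IH].
  - rewrite Nat.add_0_r. split; [auto|lra].
  - rewrite Nat.add_succ_r. destruct IH as [I1 [I2 I3]].
    destruct (st_spec c T X hc HT (i + d)) as [A1 [A2 _]].
    destruct (step_spec T X (i + d) _ A1 A2) as [_ [_ [J3 [J4 [J5 _]]]]].
    change (st c T X (S (i + d))) with (stepS T X (i + d) (st c T X (i + d))).
    split; [intros n Hn; apply I1, J3, Hn|]. lra.
Qed.

Lemma st_mono' c T X (hc : 0 < c) (HT : forall n, 0 <= T n <= c) i j : (i <= j)%nat ->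
  (forall n, sP (st c T X j) n -> sP (st c T X i) n) /\
  sl (st c T X i) <= sl (st c T X j) /\ sr (st c T X j) <= sr (st c T X i).
Proof. intro H. replace j with (i + (j - i))%nat by lia. apply st_mono; auto. Qed.

Definition xs c T X (k : Z) : bool :=
  decb (exists n, sP (st c T X (S (Z.abs_nat k))) n /\ X n k = true).

Lemma xs_spec c T X (hc : 0 < c) (HT : forall n, 0 <= T n <= c) k j n :
  (Z.abs_nat k < j)%nat -> sP (st c T X j) n -> X n k = xs c T X k.
Proof.
  intros Hj Hn.
  destruct (st_mono' c T X hc HT (S (Z.abs_nat k)) j Hj) as [M _].
  apply M in Hn.
  destruct (st_spec c T X hc HT (Z.abs_nat k)) as [A1 [A2 _]].
  destruct (step_spec T X (Z.abs_nat k) _ A1 A2) as [_ [_ [_ [_ [_ [_ [b1 [b2 Hb]]]]]]]].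
  assert (Hbeta : exists beta, forall n, sP (st c T X (S (Z.abs_nat k))) n -> X n k = beta).
  { destruct (Z_le_gt_dec 0 k).
    - exists b1. intros n' Hn'. destruct (Hb n' Hn') as [E _].
      replace k with (Z.of_nat (Z.abs_nat k)) by lia. exact E.
    - exists b2. intros n' Hn'. destruct (Hb n' Hn') as [_ E].
      replace k with (- Z.of_nat (Z.abs_nat k))%Z by lia. exact E. }
  destruct Hbeta as [beta Hbeta].
  unfold xs, decb. destruct (excluded_middle_informative _) as [[n' [Pn' Xn']]|Hne].
  - rewrite (Hbeta n Hn), <- (Hbeta n' Pn'). exact Xn'.
  - destruct (X n k) eqn:E; [exfalso; apply Hne; exists n; split; auto|reflexivity].
Qed.

Lemma tstar c T X (hc : 0 < c) (HT : forall n, 0 <= T n <= c) :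
  exists ts, forall j, sl (st c T X j) <= ts <= sr (st c T X j).
Proof.
  set (E := fun y => exists j, y = sl (st c T X j)).
  assert (Hub : forall i j, sl (st c T X i) <= sr (st c T X j)).
  { intros i j. destruct (st_mono' c T X hc HT i (Nat.max i j) ltac:(lia)) as [_ [A _]].
    destruct (st_mono' c T X hc HT j (Nat.max i j) ltac:(lia)) as [_ [_ B]].
    destruct (st_spec c T X hc HT (Nat.max i j)) as [_ [_ [C _]]]. lra. }
  destruct (completeness E) as [ts [H1 H2]].
  - exists c. intros y [j ->]. apply (Hub j O).
  - exists (sl (st c T X O)). exists O. reflexivity.
  - exists ts. intro j. split.
    + apply H1. exists j. reflexivity.
    + apply H2. intros y [i ->]. apply Hub.
Qed.

Lemma side c T X (hc : 0 < c) (HT : forall n, 0 <= T n <= c) ts :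
  (forall j, io (fun n => sP (st c T X j) n /\ ts <= T n)) \/
  (forall j, io (fun n => sP (st c T X j) n /\ T n < ts)).
Proof.
  apply NNPP. intro H. apply not_or_and in H. destruct H as [H1 H2].
  apply not_all_ex_not in H1. destruct H1 as [j1 H1].
  apply not_all_ex_not in H2. destruct H2 as [j2 H2].
  destruct (st_spec c T X hc HT (Nat.max j1 j2)) as [A _].
  destruct (st_mono' c T X hc HT j1 (Nat.max j1 j2) ltac:(lia)) as [M1 _].
  destruct (st_mono' c T X hc HT j2 (Nat.max j1 j2) ltac:(lia)) as [M2 _].
  destruct (io_split _ (fun n => ts <= T n) A) as [B|B].
  - apply H1. revert B. apply io_mono. intros n [p q]. auto.
  - apply H2. revert B. apply io_mono. intros n [p q]. split; [auto|lra].
Qed.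

Lemma G_above c (hc : 0 < c) s0 : exists e, 0 < e /\
  forall s, s0 <= s <= s0 + e -> (in_Ico c s <-> in_Ico c s0).
Proof.
  unfold in_Ico.
  destruct (Rlt_dec s0 0).
  - exists (- s0 / 2). split; [lra|]. intros s Hs. split; intros; lra.
  - destruct (Rlt_dec s0 c).
    + exists ((c - s0)/2). split; [lra|]. intros s Hs. split; intros; lra.
    + exists 1. split; [lra|]. intros s Hs. split; intros; lra.
Qed.

Lemma G_below c (hc : 0 < c) s0 : exists e, 0 < e /\
  forall s, s0 - e <= s < s0 -> (in_Ico c s <-> in_Ico c (c - s0)).
Proof.
  unfold in_Ico.
  destruct (Rle_dec s0 0).
  - exists 1. split; [lra|]. intros s Hs. split; intros; lra.
  - destruct (Rle_dec s0 c).
    + exists s0. split; [lra|]. intros s Hs. split; intros; lra.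
    + exists (s0 - c). split; [lra|]. intros s Hs. split; intros; lra.
Qed.

Lemma fin_min (G : Z -> R -> Prop) :
  (forall k e e', 0 < e' <= e -> G k e -> G k e') ->
  (forall k, exists e, 0 < e /\ G k e) ->
  forall K : nat, exists e, 0 < e /\ forall k, (Z.abs k <= Z.of_nat K)%Z -> G k e.
Proof.
  intros Hm Hg K. induction K as [|K [e [He IH]]].
  - destruct (Hg 0%Z) as [e [He H]]. exists e. split; [exact He|].
    intros k Hk. replace k with 0%Z by lia. exact H.
  - destruct (Hg (Z.of_nat (S K))) as [e1 [He1 H1]].
    destruct (Hg (- Z.of_nat (S K))%Z) as [e2 [He2 H2]].
    exists (Rmin e (Rmin e1 e2)).
    assert (P : 0 < Rmin e (Rmin e1 e2)) by (repeat apply Rmin_glb_lt; auto).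
    pose proof (Rmin_l e (Rmin e1 e2)). pose proof (Rmin_r e (Rmin e1 e2)).
    pose proof (Rmin_l e1 e2). pose proof (Rmin_r e1 e2).
    split; [exact P|]. intros k Hk.
    destruct (Z_le_gt_dec (Z.abs k) (Z.of_nat K)).
    + apply (Hm k e); [lra|]. apply IH; auto.
    + destruct (Z_le_gt_dec 0 k).
      * replace k with (Z.of_nat (S K)) by lia. apply (Hm _ e1); [lra|exact H1].
      * replace k with (- Z.of_nat (S K))%Z by lia. apply (Hm _ e2); [lra|exact H2].
Qed.

Lemma out_window a b c (ha : 0 < a) (hb : 0 < b) t M (K : nat) k :
  0 <= t <= c -> a * Rabs M + c < INR K * b -> (Z.of_nat K < Z.abs k)%Z ->
  ~ in_Ico c (t - a * M + b * IZR k).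
Proof.
  intros Ht HK Hk. unfold in_Ico.
  assert (A1 : a * M <= a * Rabs M) by (apply Rmult_le_compat_l; [lra|apply Rle_abs]).
  assert (A2 : a * (- M) <= a * Rabs M).
  { apply Rmult_le_compat_l; [lra|]. rewrite <- Rabs_Ropp. apply Rle_abs. }
  rewrite INR_IZR_INZ in HK.
  destruct (Z_le_gt_dec 0 k).
  - assert (B : IZR (Z.of_nat K) + 1 <= IZR k).
    { rewrite <- plus_IZR. apply IZR_le. lia. }
    assert (C : b * (IZR (Z.of_nat K) + 1) <= b * IZR k) by (apply Rmult_le_compat_l; lra).
    intro; lra.
  - assert (B : IZR k <= - (IZR (Z.of_nat K) + 1)).
    { rewrite <- plus_IZR, <- opp_IZR. apply IZR_le. lia. }
    assert (C : b * IZR k <= b * (- (IZR (Z.of_nat K) + 1))) by (apply Rmult_le_compat_l; lra).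
    intro; lra.
Qed.

Lemma getK b r : 0 < b -> exists K : nat, r < INR K * b.
Proof.
  intro hb. destruct (INR_unbounded (r / b)) as [K HK]. exists K.
  apply (Rmult_lt_compat_r b) in HK; [|lra]. unfold Rdiv in HK.
  rewrite Rmult_assoc, Rinv_l, Rmult_1_r in HK; lra.
Qed.

Lemma width_small w j J e c : 0 <= w -> w * (INR j + 1) <= c -> c < INR J * e -> (J <= j)%nat -> 0 < e -> w <= e.
Proof.
  intros H1 H2 H3 H4 H5. apply le_INR in H4.
  destruct (Rle_dec w e) as [h|h]; [exact h|exfalso].
  assert (e * (INR j + 1) <= w * (INR j + 1)) by (apply Rmult_le_compat_r; [pose proof (pos_INR j)|]; lra).
  assert (e * INR J <= e * (INR j + 1)) by (apply Rmult_le_compat_l; lra). lra.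
Qed.

Lemma compact_D a b c (ha : 0 < a) (hb : 0 < b) (hc : 0 < c) (T : nat -> R) (X : nat -> Z -> bool) :
  (forall n, 0 <= T n <= c) -> (forall n, X n 0%Z = true) ->
  (forall n m, (Z.abs m <= Z.of_nat n)%Z -> Mx_val a b c (T n) (X n) m 2) ->
  exists t, D_set a b c t.
Proof.
  intros HT HX0 HM.
  destruct (tstar c T X hc HT) as [ts Hts].
  assert (xs0 : xs c T X 0 = true).
  { destruct (st_spec c T X hc HT 1) as [I _]. destruct (I O) as [n [_ Pn]].
    rewrite <- (xs_spec c T X hc HT 0 1 n); [apply HX0| simpl; lia | exact Pn]. }
  assert (Hts0 : 0 <= ts <= c) by (apply (Hts O)).
  destruct (side c T X hc HT ts) as [Hside|Hside].
  - exists ts. exists (xs c T X). split; [exact xs0|]. intro m.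
    destruct (getK b (a * Rabs (IZR m) + c) hb) as [K HK].
    destruct (fin_min (fun k e => forall s, (ts - a*IZR m + b*IZR k) <= s <= (ts - a*IZR m + b*IZR k) + e
        -> (in_Ico c s <-> in_Ico c (ts - a*IZR m + b*IZR k)))) with (K := K) as [e [He Hk]].
    { intros k e e' He H s Hs. apply H. lra. }
    { intro k. apply G_above. exact hc. }
    destruct (getK e c He) as [J HJ].
    set (j := Nat.max J (S K)).
    destruct (Hside j (Z.abs_nat m)) as [n [Hn [Pn Tn]]].
    destruct (st_spec c T X hc HT j) as [_ [B [W1 W2]]].
    pose proof (B n Pn). pose proof (Hts j).
    assert (Hw : sr (st c T X j) - sl (st c T X j) <= e)
      by (apply (width_small _ j J e c); auto; unfold j; lia).
    change (cnt (fun k => xs c T X k = true /\ in_Ico c (ts - a*IZR m + b*IZR k)) 2).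
    apply (cnt_ext (fun k => X n k = true /\ in_Ico c (T n - a*IZR m + b*IZR k))); [|apply HM; lia].
    intro k. destruct (Z_le_gt_dec (Z.abs k) (Z.of_nat K)) as [l|l].
    + rewrite (xs_spec c T X hc HT k j n); [|unfold j; lia|exact Pn].
      pose proof (Hk k l (T n - a*IZR m + b*IZR k) ltac:(lra)) as Hi. tauto.
    + pose proof (out_window a b c ha hb (T n) (IZR m) K k (HT n) HK ltac:(lia)).
      pose proof (out_window a b c ha hb ts (IZR m) K k Hts0 HK ltac:(lia)). tauto.
  - exists (c - ts). exists (fun k => xs c T X (- k)). split; [simpl; exact xs0|]. intro m.
    set (m0 := (- m)%Z).
    destruct (getK b (a * Rabs (IZR m0) + c) hb) as [K HK].
    destruct (fin_min (fun k e => forall s, (ts - a*IZR m0 + b*IZR k) - e <= s < (ts - a*IZR m0 + b*IZR k)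
        -> (in_Ico c s <-> in_Ico c (c - (ts - a*IZR m0 + b*IZR k))))) with (K := K) as [e [He Hk]].
    { intros k e e' He H s Hs. apply H. lra. }
    { intro k. apply G_below. exact hc. }
    destruct (getK e c He) as [J HJ].
    set (j := Nat.max J (S K)).
    destruct (Hside j (Z.abs_nat m0)) as [n [Hn [Pn Tn]]].
    destruct (st_spec c T X hc HT j) as [_ [B [W1 W2]]].
    pose proof (B n Pn). pose proof (Hts j).
    assert (Hw : sr (st c T X j) - sl (st c T X j) <= e)
      by (apply (width_small _ j J e c); auto; unfold j; lia).
    assert (Hpt : forall k0, (X n k0 = true /\ in_Ico c (T n - a*IZR m0 + b*IZR k0)) <->
       (xs c T X k0 = true /\ in_Ico c (c - (ts - a*IZR m0 + b*IZR k0)))).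
    { intro k. destruct (Z_le_gt_dec (Z.abs k) (Z.of_nat K)) as [l|l].
      + rewrite (xs_spec c T X hc HT k j n); [|unfold j; lia|exact Pn].
        pose proof (Hk k l (T n - a*IZR m0 + b*IZR k) ltac:(lra)) as Hi. tauto.
      + pose proof (out_window a b c ha hb (T n) (IZR m0) K k (HT n) HK ltac:(lia)).
        assert (Hts1 : 0 <= c - ts <= c) by lra.
        assert (HK' : a * Rabs (- IZR m0) + c < INR K * b) by (rewrite Rabs_Ropp; exact HK).
        pose proof (out_window a b c ha hb (c - ts) (- IZR m0) K (- k) Hts1 HK' ltac:(lia)) as O2.
        replace (c - ts - a * - IZR m0 + b * IZR (- k)) with (c - (ts - a*IZR m0 + b*IZR k)) in O2
          by (rewrite opp_IZR; ring).
        tauto. }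
    change (cnt (fun k => xs c T X (- k) = true /\ in_Ico c (c - ts - a*IZR m + b*IZR k)) 2).
    apply (cnt_bij (fun k => X n k = true /\ in_Ico c (T n - a*IZR m0 + b*IZR k)) _ 2 Z.opp Z.opp);
      [intro; lia|intro; lia| |apply HM; lia].
    intro k. rewrite Hpt.
    assert (E : c - (ts - a*IZR m0 + b*IZR (- k)) = c - ts - a*IZR m + b*IZR k)
      by (unfold m0; rewrite !opp_IZR; ring).
    rewrite E. tauto.
Qed.

Theorem lemma3p4 (a b c : R) (ha : 0 < a) (hab : a < b) (hbc : b < c) :
  (forall t : R, ~ D_set a b c t) <-> Q_finite a b c.
Proof.
  split.
  - intro HD. apply NNPP. intro HQ.
    assert (HN : forall N : nat, exists p : R * (Z -> bool), 0 <= fst p < c /\ snd p 0%Z = true /\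
       forall m, (Z.abs m <= Z.of_nat N)%Z -> Mx_val a b c (fst p) (snd p) m 2).
    { intro N.
      assert (exists t x n, has_run a b c t x n /\ (2*N+1 <= n)%nat) as [t [x [n [Hr Hn]]]].
      { apply NNPP; intro H. apply HQ. exists (2*N)%nat. intros t x n Hr.
        apply NNPP. intro Hn. apply H. exists t, x, n. split; [exact Hr|lia]. }
      destruct (normalize a b c N t x n Hr Hn) as [t' [x' H']]. exists (t', x'). exact H'. }
    set (F := fun N => proj1_sig (constructive_indefinite_description _ (HN N))).
    assert (HF : forall N, 0 <= fst (F N) < c /\ snd (F N) 0%Z = true /\
       forall m, (Z.abs m <= Z.of_nat N)%Z -> Mx_val a b c (fst (F N)) (snd (F N)) m 2)
      by (intro N; exact (proj2_sig (constructive_indefinite_description _ (HN N)))).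
    destruct (compact_D a b c ha ltac:(lra) ltac:(lra) (fun N => fst (F N)) (fun N => snd (F N)))
      as [t Ht].
    + intro n. destruct (HF n) as [h _]. lra.
    + intro n. apply (HF n).
    + intros n m Hm. apply (HF n). exact Hm.
    + exact (HD t Ht).
  - intros [N HN] t [x [Hx0 Hall]].
    assert (H : has_run a b c t x (S N)) by (exists 0%Z; intros j _; apply Hall).
    specialize (HN t x (S N) H). lia.
Qed.
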